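(* Let $R$ be a commutative ring with nonzero identity, let $\delta$ be an expansion of ideals of $R$, and let $I$ be a proper ideal of $R$. The following statements are equivalent: (1) $I$ is a $\delta$-$n$-ideal of $R$. (2) $(I:a)\subseteq\sqrt{0}$ for all $a\in R\setminus\delta(I)$. (3) If $aJ\subseteq I$ for some $a\in R$ and some ideal $J$ of $R$, then $a\in\sqrt{0}$ or $J\subseteq\delta(I)$. (4) If $JK\subseteq I$ for some ideals $J,K$ of $R$, then $J\cap(R\setminus\sqrt{0})=\emptyset$ or $K\subseteq\delta(I)$.
   Context: An expansion of ideals of a ring $R$ is a map $\delta$ from the set of ideals of $R$ to itself such that $I\subseteq\delta(I)$ for every ideal $I$, and $\delta(I)\subseteq\delta(J)$ whenever $I\subseteq J$. $\sqrt{0}$ denotes the nilradical of $R$, and $(I:a)=\{r\in R: ra\in I\}$. Given an expansion $\delta$, a proper ideal $I$ of $R$ is a $\delta$-$n$-ideal if whenever $a,b\in R$ with $ab\in I$ and $a\notin\sqrt{0}$, then $b\in\delta(I)$. *)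

(* Defs.v *)
(* Ideals of a commutative ring are represented as predicates R -> Prop. *)
From mathcomp Require Import all_boot all_algebra.
Set Implicit Arguments. Unset Strict Implicit. Unset Printing Implicit Defensive.
Import GRing.Theory.
Local Open Scope ring_scope.

Section Ideals.
Variable R : comNzRingType.

Definition psubset (A B : R -> Prop) : Prop := forall x, A x -> B x.

Definition dis_ideal (I : R -> Prop) : Prop :=
  [/\ I 0, (forall x y, I x -> I y -> I (x + y)) & (forall r x, I x -> I (r * x))].

Definition dproper_ideal (I : R -> Prop) : Prop := dis_ideal I /\ ~ I 1.

Definition nilrad (x : R) : Prop := exists n : nat, x ^+ n = 0.

Definition colon (I : R -> Prop) (a : R) : R -> Prop := fun r => I (r * a).

Definition scal_ideal (a : R) (J : R -> Prop) : R -> Prop :=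
  fun x => exists2 j, J j & x = a * j.

Definition ideal_prod (J K : R -> Prop) : R -> Prop :=
  fun x => exists (n : nat) (u v : 'I_n -> R),
    (forall i, J (u i) /\ K (v i)) /\ x = \sum_(i < n) u i * v i.

Definition expansion (delta : (R -> Prop) -> (R -> Prop)) : Prop :=
  (forall I, dis_ideal I -> dis_ideal (delta I)) /\
  (forall I, dis_ideal I -> psubset I (delta I)) /\
  (forall I J, dis_ideal I -> dis_ideal J -> psubset I J -> psubset (delta I) (delta J)).

Definition delta_n_ideal (delta : (R -> Prop) -> (R -> Prop)) (I : R -> Prop) : Prop :=
  dproper_ideal I /\
  forall a b : R, I (a * b) -> ~ nilrad a -> delta I b.

End Ideals.

(* Main.v *)
Require Import Defs.
From mathcomp Require Import all_boot all_algebra.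
From Stdlib Require Import Classical.
Local Open Scope ring_scope.
Import GRing.Theory.

Lemma principal_ideal (R : comNzRingType) (b : R) :
  dis_ideal (fun x => exists r, x = r * b).
Proof.
split.
- by exists 0; rewrite mul0r.
- by move=> x y [r ->] [s ->]; exists (r + s); rewrite mulrDl.
- by move=> r x [s ->]; exists (r * s); rewrite mulrA.
Qed.

Theorem theorem2p7 (R : comNzRingType) (delta : (R -> Prop) -> (R -> Prop))
  (I : R -> Prop) :
  expansion delta -> dproper_ideal I ->
  (delta_n_ideal delta I <->
     (forall a : R, ~ delta I a -> psubset (colon I a) (@nilrad R))) /\
  (delta_n_ideal delta I <->
     (forall (a : R) (J : R -> Prop), dis_ideal J ->
        psubset (scal_ideal a J) I -> nilrad a \/ psubset J (delta I))) /\
  (delta_n_ideal delta I <->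
     (forall J K : R -> Prop, dis_ideal J -> dis_ideal K ->
        psubset (ideal_prod J K) I ->
        (forall x, J x -> nilrad x) \/ psubset K (delta I))).
Proof.
move=> _ HI; have HI' := HI; case: HI' => [[I0 ID IM] _].
split; [|split].
- split.
  + move=> [_ H] a Hna r Hr; apply: NNPP => Hr'; apply: Hna; exact: H Hr Hr'.
  + move=> H; split=> // a b Hab Ha; apply: NNPP => Hb; apply: Ha.
    by apply: (H b Hb); rewrite /colon.
- split.
  + move=> [_ H] a J HJ Hs; case: (classic (nilrad a)) => Ha; [by left|right].
    move=> j Jj; apply: (H a j) => //; apply: Hs; by exists j.
  + move=> H; split=> // a b Hab Ha.
    case: (H a _ (@principal_ideal R b)).
    * move=> x [j [r ->] ->]; rewrite mulrA (mulrC a) -mulrA; exact: IM.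
    * by move=> /Ha.
    * by move=> Hs; have := Hs b; rewrite /=; apply; exists 1; rewrite mul1r.
- split.
  + move=> [_ H] J K HJ HK Hs.
    case: (classic (forall x, J x -> nilrad x)) => Hn; [by left|right].
    have [x Hx] := not_all_ex_not _ _ Hn.
    have [Jx Nx] := imply_to_and _ _ Hx.
    move=> k Kk; apply: (H x k) => //; apply: Hs.
    exists 1%N, (fun _ => x), (fun _ => k); split=> //.
    by rewrite big_ord1.
  + move=> H; split=> // a b Hab Ha.
    case: (H _ _ (@principal_ideal R a) (@principal_ideal R b)).
    * move=> x [n [u [v [Huv ->]]]].
      apply: (big_ind I) => // i _.
      have [[r Er] [s Es]] := Huv i.
      rewrite Er Es mulrA (mulrC (r * a)) mulrA -(mulrA (s * r)); exact: IM.
    * by move=> /(_ a) Hn; exfalso; apply: Ha; apply: Hn; exists 1; rewrite mul1r.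
    * by move=> Hs; apply: Hs; exists 1; rewrite mul1r.
Qed.
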